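(* Let $G_m$ be a chain hexagonal cactus of length $m\ge 2$ with hexagons $h_1,\dots,h_m$ ordered along the chain (consecutive hexagons share a cut-vertex, $h_1$ and $h_m$ terminal). Let $c$ be the cut-vertex shared by $h_{m-1}$ and $h_m$, and label the vertices of $h_{m-1}$ as $a,b,c,i,j,k$ so that its edges are $ab,bc,ci,ij,jk,ka$. Let $H_{m-1}$ be the subgraph of $G_m$ induced by the vertices of $h_1,\dots,h_{m-1}$. Then at least one of the following holds: (i) $2\,\Psi(H_{m-1}-\{b,c\})\ge \Psi(H_{m-1}-c)$; (ii) $2\,\Psi(H_{m-1}-\{c,i\})\ge \Psi(H_{m-1}-c)$.
   Context: A matching of a graph is a set of pairwise vertex-disjoint edges; it is maximal if it is not a proper subset of another matching. $\Psi(G)$ is the number of maximal matchings of $G$. For a vertex set $S$, $G-S$ (or $G-v$ when $S=\{v\}$) is the graph obtained by deleting the vertices of $S$ and all incident edges. A chain hexagonal cactus is a connected graph all of whose blocks are 6-cycles (hexagons), in which each hexagon has at most two cut-vertices and each cut-vertex lies in exactly two hexagons; its length is its number of hexagons; terminal hexagons are those with exactly one cut-vertex. *)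

(* Defs.v *)
From mathcomp Require Import all_boot.
Set Implicit Arguments. Unset Strict Implicit. Unset Printing Implicit Defensive.

Section Graphs.
Variable T : finType.

Definition edge_in (e : rel T) (U : {set T}) (f : {set T}) : bool :=
  [exists x, exists y, [&& f == [set x; y], e x y, x \in U & y \in U]].

Definition matching (e : rel T) (U : {set T}) (M : {set {set T}}) : bool :=
  [forall f in M, edge_in e U f] &&
  [forall f in M, forall g in M, (f != g) ==> [disjoint f & g]].

Definition maximal_matching (e : rel T) (U : {set T}) (M : {set {set T}}) : bool :=
  matching e U M &&
  [forall M' : {set {set T}}, (matching e U M' && (M \subset M')) ==> (M' == M)].

Definition Psi (e : rel T) (U : {set T}) : nat :=
  #|[set M : {set {set T}} | maximal_matching e U M]|.

Definition hexV (h : 'I_6 -> T) : {set T} := [set h k | k : 'I_6].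
Definition hex_edge (h : 'I_6 -> T) (x y : T) : bool :=
  [exists k : 'I_6, ((x == h k) && (y == h (ordS k))) ||
                    ((y == h k) && (x == h (ordS k)))].

(* (T,e) is a chain hexagonal cactus of length m with hexagons h 0, ..., h (m-1)
   in chain order: each h t is a 6-cycle, vertices/edges are exactly those of
   the hexagons, consecutive hexagons share exactly one vertex, and
   non-consecutive hexagons are vertex-disjoint. *)
Definition chain_hex_cactus (e : rel T) (m : nat) (h : nat -> 'I_6 -> T) : Prop :=
  [/\ forall t, t < m -> injective (h t),
      forall x : T, exists2 t, t < m & x \in hexV (h t),
      forall x y : T, e x y <-> exists2 t, t < m & hex_edge (h t) x y
    & forall s t, s < t -> t < m ->
        #|hexV (h s) :&: hexV (h t)| = (if t == s.+1 then 1 else 0)].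
End Graphs.

(* Main.v *)
Require Import Defs.
From mathcomp Require Import all_boot zify.
Set Implicit Arguments. Unset Strict Implicit. Unset Printing Implicit Defensive.

Section Gen.
Variable T : finType.
Variable e : rel T.

Lemma disjP (A B : {set T}) :
  reflect (forall x, x \in A -> x \in B -> False) [disjoint A & B].
Proof.
rewrite -setI_eq0; apply: (iffP eqP) => [H x xA xB|H].
  by move: (in_set0 x); rewrite -H inE xA xB.
apply/setP=> x; rewrite !inE; apply/negbTE/negP => /andP[]; exact: H.
Qed.

Lemma edge_in_sub (U : {set T}) (v : T) (f : {set T}) : edge_in e (U :\ v) f = edge_in e U f && (v \notin f).
Proof.
apply/idP/idP.
  case/existsP=> x /existsP[y /and4P[/eqP-> exy]].
  rewrite !inE => /andP[xv xU] /andP[yv yU].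
  rewrite negb_or eq_sym xv eq_sym yv andbT.
  by rewrite andbT /edge_in; apply/existsP; exists x; apply/existsP; exists y; rewrite eqxx exy xU yU.
case/andP=> /existsP[x /existsP[y /and4P[/eqP fE exy xU yU]]].
rewrite fE !inE negb_or => /andP[vx vy].
rewrite /edge_in; apply/existsP; exists x; apply/existsP; exists y.
by rewrite eqxx exy !inE xU yU eq_sym vx eq_sym vy.
Qed.

Lemma matchingP (U : {set T}) (M : {set {set T}}) :
  reflect ((forall f, f \in M -> edge_in e U f) /\
           (forall f g, f \in M -> g \in M -> f != g -> [disjoint f & g]))
          (matching e U M).
Proof.
apply: (iffP andP) => [[/forall_inP H1 /forall_inP H2]|[H1 H2]].
  split=> // f g fM gM fg; move: (H2 f fM) => /forall_inP/(_ g gM).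
  by rewrite fg.
split; apply/forall_inP => // f fM; apply/forall_inP => g gM.
by apply/implyP; exact: H2.
Qed.

Lemma maxP (U : {set T}) (M : {set {set T}}) : matching e U M ->
  reflect (forall f, edge_in e U f -> f \notin M ->
             exists2 g, g \in M & ~~ [disjoint f & g])
          (maximal_matching e U M).
Proof.
move=> mM; apply: (iffP idP).
  case/andP=> _ /forallP mx f ef fM.
  case: (boolP [forall g in M, [disjoint f & g]]) => H; last first.
    by move/forall_inPn: H.
  have: matching e U (f |: M).
    move/matchingP: mM => [m1 m2]; apply/matchingP; split.
      by move=> g; rewrite in_setU1 => /predU1P[->|/m1].
    move=> g1 g2; rewrite !in_setU1 => /predU1P[->|g1M] /predU1P[->|g2M].
    - by rewrite eqxx.
    - by move=> _; move/forall_inP: H; apply.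
    - by move=> _; rewrite disjoint_sym; move/forall_inP: H; apply.
    - by apply: m2.
  move=> mfM; move: (mx (f |: M)); rewrite mfM subsetUr /= => /eqP E.
  by move: fM; rewrite -E setU11.
move=> Hm; apply/andP; split=> //; apply/forallP => M'.
apply/implyP => /andP[mM' sub]; rewrite eqEsubset sub andbT.
apply/subsetP => f fM'; apply/negPn/negP => fM.
move/matchingP: mM' => [m1 m2].
have [g gM ndj] := Hm f (m1 f fM') fM.
have gM' : g \in M' by move/subsetP: sub; apply.
have fg : f != g by apply/eqP => E; move: fM; rewrite E gM.
by move: (m2 f g fM' gM' fg); rewrite (negbTE ndj).
Qed.

Lemma psi_pendant (U : {set T}) (v w : T) : w != v ->
  (forall f, edge_in e U f -> v \in f -> f = [set v; w]) ->
  Psi e U <= 2 * Psi e (U :\ v).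
Proof.
move=> wv Hv.
set vw := [set v; w].
rewrite /Psi.
set S := [set M | maximal_matching e U M].
set S' := [set M | maximal_matching e (U :\ v) M].
rewrite -(cardsID [set M : {set {set T}} | vw \in M] S) mul2n -addnn.
apply: leq_add; last first.
  apply: subset_leq_card; apply/subsetP => M.
  rewrite !inE => /andP[vwM mxM].
  have mM : matching e U M by case/andP: mxM.
  move/matchingP: (mM) => [m1 m2].
  have nv : forall f, f \in M -> v \notin f.
    by move=> f fM; apply/negP => vf; move: vwM; rewrite /vw -(Hv f (m1 f fM) vf) fM.
  have mM' : matching e (U :\ v) M.
    apply/matchingP; split=> // f fM; rewrite edge_in_sub m1 //=; exact: nv.
  apply/(maxP mM') => f; rewrite edge_in_sub => /andP[ef _] fM.
  exact: (elimT (maxP mM) mxM).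
pose M' (M : {set {set T}}) := M :\ vw.
pose P (M : {set {set T}}) f0 :=
  edge_in e (U :\ v) f0 && (f0 \notin M' M) && [forall g in M' M, [disjoint f0 & g]].
pose gm M := if [pick f0 | P M f0] is Some f0 then f0 |: M' M else M' M.
pose r (N : {set {set T}}) := vw |: [set f in N | w \notin f].
have key : forall M : {set {set T}}, M \in S :&: [set M : {set {set T}} | vw \in M] ->
    gm M \in S' /\ r (gm M) = M.
  move=> M; rewrite !inE => /andP[mxM vwM].
  have mM : matching e U M by case/andP: mxM.
  move/matchingP: (mM) => [m1 m2].
  have F1 : forall f, f \in M' M -> (v \notin f) && (w \notin f).
    move=> f; rewrite !inE => /andP[fvw fM].
    move: (m2 f vw fM vwM fvw) => /disjP dj.
    by apply/andP; split; apply/negP => xf; apply: (dj _ xf); rewrite !inE eqxx ?orbT.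
  have m1' : forall f, f \in M' M -> edge_in e (U :\ v) f.
    move=> f fM'; rewrite edge_in_sub; case/andP: (F1 f fM') => -> _.
    by rewrite m1 //; move: fM'; rewrite inE => /andP[].
  have F3 : forall f, edge_in e (U :\ v) f ->
      (forall g, g \in M' M -> [disjoint f & g]) -> w \in f.
    move=> f; rewrite edge_in_sub => /andP[ef vf] dj.
    have fM : f \notin M.
      apply/negP => fM; case: (eqVneq f vw) => [fvw|fne].
        by move: vf; rewrite fvw !inE eqxx.
      have fM' : f \in M' M by rewrite !inE fne.
      move: (dj f fM') => /disjP dj'.
      move: ef => /existsP[x /existsP[y /and4P[/eqP fE _ _ _]]].
      by apply: (dj' x); rewrite fE !inE eqxx.
    have [g gM ndj] := (elimT (maxP mM) mxM) f ef fM.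
    case: (eqVneq g vw) => [gvw|gne].
      case: (boolP (w \in f)) => // wf; case/negP: ndj; apply/disjP => x xf.
      rewrite gvw !inE => /orP[]/eqP xE; subst x; by [rewrite xf in vf|rewrite xf in wf].
    by move: (dj g); rewrite !inE gne gM (negbTE ndj) => /(_ isT).
  have r_ok : forall (N : {set {set T}}) (f0 : {set T}), w \in f0 -> (N = f0 |: M' M \/ N = M' M) -> r N = M.
    move=> N f0 wf0 NE; rewrite /r.
    have -> : [set f in N | w \notin f] = M' M.
      apply/setP => f; have E : (f \in M' M) = (f != vw) && (f \in M) by rewrite !inE.
      case: NE => ->; rewrite !inE -E; last first.
        case: (boolP (f \in M' M)) => fM' //=.
        by case/andP: (F1 f fM') => _ ->.
      case: (eqVneq f f0) => [->|_] /=.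
        rewrite wf0 /=; case: (boolP (f0 \in M' M)) => // h.
        by case/andP: (F1 _ h) => _ /negP.
      case: (boolP (f \in M' M)) => fM' //=.
      by case/andP: (F1 f fM') => _ ->.
    by rewrite /M' setD1K.
  have mM' : matching e (U :\ v) (M' M).
    apply/matchingP; split=> // f g; rewrite !inE => /andP[_ fM] /andP[_ gM].
    exact: m2.
  rewrite /gm; case: pickP => [f0 Pf0|nP].
    move: (Pf0) => /andP[/andP[ef0 f0M'] /forall_inP dj0].
    have wf0 : w \in f0 by apply: F3.
    have mN : matching e (U :\ v) (f0 |: M' M).
      move/matchingP: mM' => [n1 n2]; apply/matchingP; split.
        by move=> g; rewrite in_setU1 => /predU1P[->|/n1].
      move=> g1 g2; rewrite !in_setU1 => /predU1P[->|g1M] /predU1P[->|g2M].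
      - by rewrite eqxx.
      - by move=> _; apply: dj0.
      - by move=> _; rewrite disjoint_sym; apply: dj0.
      - by apply: n2.
    split; last by apply: (r_ok _ f0 wf0); left.
     apply/(maxP mN) => f ef fN.
    case: (boolP [forall g in f0 |: M' M, [disjoint f & g]]) => H; last first.
      by move/forall_inPn: H.
    move/forall_inP: H => H.
    have wf := F3 f ef (fun g gM => H g (setU1r _ gM)).
    move: (H f0 (setU11 _ _)) => /disjP dj.
    by case: (dj w wf wf0).
  split; last by apply: (r_ok _ vw); [rewrite !inE eqxx orbT|right].
  apply/(maxP mM') => f ef fN.
  case: (boolP [forall g in M' M, [disjoint f & g]]) => H; last first.
    by move/forall_inPn: H.
  by move: (nP f); rewrite /P ef fN H.
have ginj : {in S :&: [set M : {set {set T}} | vw \in M] &, injective gm}.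
  move=> M1 M2 H1 H2 E.
  by rewrite -(proj2 (key M1 H1)) -(proj2 (key M2 H2)) E.
rewrite -(card_in_imset ginj); apply: subset_leq_card.
apply/subsetP => N /imsetP[M HM ->]; exact: (proj1 (key M HM)).
Qed.
End Gen.


Lemma ord6_facts (p : 'I_6) :
  [/\ ord_pred p != p, ordS p != p, ord_pred p != ordS p,
      ord_pred (ord_pred p) != ord_pred p & ordS (ordS p) != ordS p].
Proof. by case: p => [[|[|[|[|[|[|?]]]]]] ?]. Qed.

Lemma card1_eq (T : finType) (A : {set T}) x y :
  #|A| = 1 -> x \in A -> y \in A -> x = y.
Proof.
move=> c1 xA yA; have /card_le1_eqP H : #|A| <= 1 by rewrite c1.
exact: H.
Qed.

Unset Implicit Arguments.

Theorem lemma3p11 (T : finType) (e : rel T) (m : nat) (h : nat -> 'I_6 -> T)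
  (p : 'I_6) :
  2 <= m -> chain_hex_cactus e m h ->
  h (m - 2) p \in hexV (h (m - 1)) ->
  let H := \bigcup_(t < m.-1) hexV (h t) in
  let c := h (m - 2) p in
  let b := h (m - 2) (ord_pred p) in
  let i := h (m - 2) (ordS p) in
  Psi e (H :\ c) <= 2 * Psi e (H :\: [set b; c]) \/
  Psi e (H :\ c) <= 2 * Psi e (H :\: [set c; i]).
Proof.
move=> m2 [hinj hcov hedge hcap] cm H c b i.
have [f1 f2 f3 f4 f5] := ord6_facts p.
have inj2 := hinj (m - 2) ltac:(lia).
have inhex : forall t k, h t k \in hexV (h t) by move=> t k; apply: imset_f.
have LT : forall q, q != p -> (forall s, s < m - 2 -> h (m-2) q \notin hexV (h s)) ->
    forall t, t < m -> h (m-2) q \in hexV (h t) -> t = m - 2.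
  move=> q qp nearly t tm qt.
  case: (ltnP t (m - 2)) => [lt|ge]; first by rewrite (negbTE (nearly t lt)) in qt.
  case: (eqVneq t (m - 1)) => [tE|tne]; last by lia.
  subst t.
  have := hcap (m - 2) (m - 1) ltac:(lia) ltac:(lia).
  have -> : (m - 1 == (m - 2).+1) = true by apply/eqP; lia.
  move=> C1.
  have := card1_eq C1 (x := h (m-2) q) (y := c).
  rewrite !inE inhex qt cm /c inhex => /(_ isT isT) /inj2 E.
  by rewrite E eqxx in qp.
have CA : forall q, q != p -> (forall s, s < m - 2 -> h (m-2) q \notin hexV (h s)) ->
    forall f, edge_in e (H :\ c) f -> h (m-2) q \in f ->
    exists k, [/\ f = [set h (m-2) q; h (m-2) k], h (m-2) k != c &
                  (k == ordS q) || (ordS k == q)].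
  move=> q qp nearly f /existsP[x /existsP[y /and4P[/eqP fE exy xU yU]]].
  have [t tm /existsP[k hk]] := (proj1 (hedge x y)) exy.
  have xt : x \in hexV (h t).
    by case/orP: hk => /andP[/eqP E1 /eqP E2]; rewrite ?E1 ?E2 inhex.
  have yt : y \in hexV (h t).
    by case/orP: hk => /andP[/eqP E1 /eqP E2]; rewrite ?E1 ?E2 inhex.
  rewrite fE !inE => /orP[]/eqP vE.
  - have tE : t = m - 2 by apply: (LT q qp nearly t tm); rewrite vE.
    subst t.
    move: yU; rewrite !inE => /andP[yc _].
    case/orP: hk => /andP[/eqP E1 /eqP E2].
    + exists (ordS k); rewrite -vE -E2; split=> //.
      by move: vE; rewrite E1 => /inj2 ->; rewrite eqxx.
    + exists k; rewrite -vE -E1; split=> //.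
      by move: vE; rewrite E2 => /inj2 ->; rewrite eqxx orbT.
  - have tE : t = m - 2 by apply: (LT q qp nearly t tm); rewrite vE.
    subst t.
    move: xU; rewrite !inE => /andP[xc _].
    case/orP: hk => /andP[/eqP E1 /eqP E2].
    + exists k; rewrite -vE -E1 setUC; split=> //.
      by move: vE; rewrite E2 => /inj2 ->; rewrite eqxx orbT.
    + exists (ordS k); rewrite -vE -E2 setUC; split=> //.
      by move: vE; rewrite E1 => /inj2 ->; rewrite eqxx.
have ONE : forall s x, s < m - 2 -> x \in hexV (h s) -> x \in hexV (h (m - 2)) ->
    #|hexV (h s) :&: hexV (h (m - 2))| = 1 /\ s.+1 = m - 2.
  move=> s x sm xs xm.
  have := hcap s (m - 2) sm ltac:(lia).
  case: eqP => [E C|_ C]; first by split.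
  have := cards0_eq C => /setP/(_ x); by rewrite !inE xs xm.
have CB : (forall s, s < m - 2 -> b \notin hexV (h s)) \/
          (forall s, s < m - 2 -> i \notin hexV (h s)).
  case: (boolP [exists s : 'I_(m - 2), b \in hexV (h s)]) => [/existsP[s bs]|nb];
    [right|left]; last first.
    move=> s sm; apply/negP => bs; move/negP: nb; apply.
    by apply/existsP; exists (Ordinal sm).
  move=> t tm; apply/negP => it.
  have [C1 E1] := ONE s b (ltn_ord s) bs (inhex _ _).
  have [C2 E2] := ONE t i tm it (inhex _ _).
  have st : nat_of_ord s = t by lia.
  have := card1_eq C1 (x := b) (y := i).
  by rewrite !inE bs st it !inhex => /(_ isT isT) /inj2 E; rewrite E eqxx in f3.
case: CB => [nb|ni]; [left|right].
  rewrite (_ : H :\: [set b; c] = (H :\ c) :\ b); last first.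
    by apply/setP=> x; rewrite !inE; case: (x == b); case: (x == c).
  apply: (psi_pendant (w := h (m - 2) (ord_pred (ord_pred p)))).
    by apply/negP => /eqP/inj2 E; rewrite E eqxx in f4.
  move=> f ef bf; have [k [fE kc hk]] := CA (ord_pred p) f1 nb f ef bf.
  rewrite fE; case/orP: hk => /eqP kE.
    by move: kc; rewrite kE ord_predK /c eqxx.
  by rewrite /b -kE ordSK.
rewrite (_ : H :\: [set c; i] = (H :\ c) :\ i); last first.
  by apply/setP=> x; rewrite !inE; case: (x == i); case: (x == c).
apply: (psi_pendant (w := h (m - 2) (ordS (ordS p)))).
  by apply/negP => /eqP/inj2 E; rewrite E eqxx in f5.
move=> f ef bf; have [k [fE kc hk]] := CA (ordS p) f2 ni f ef bf.
rewrite fE; case/orP: hk => /eqP kE.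
  by rewrite kE.
by move: kc; rewrite (ordS_inj kE) /c eqxx.
Qed.
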